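(* Let $\mathbb{F}$ be a field, $n\ge1$, $r\ge3$, and let $\mathcal{F},\mathcal{F}'$ be flags in $\mathbb{F}^n$ of length $r$ with $\mathrm{sig}(\mathcal{F})=(i_1,\dots,i_r)$ and $\mathrm{sig}(\mathcal{F}')=(j_1,\dots,j_r)$. If the semigroups $\varphi(\mathcal{F})$ and $\varphi(\mathcal{F}')$ are isomorphic, then $i_t=j_t$ for all $t=2,\dots,r-1$.
   Context: $M(n,\mathbb{F})$ is the semigroup of $n\times n$ matrices over $\mathbb{F}$, identified with linear operators on $\mathbb{F}^n$. A flag of length $r$ is a chain $0=V_0\subsetneq V_1\subsetneq\cdots\subsetneq V_r=\mathbb{F}^n$ of subspaces; its signature is $(d_1,\dots,d_r)$ with $d_i=\dim(V_i/V_{i-1})$. $\varphi(\mathcal{F})=\{a\in M(n,\mathbb{F}) : a(V_i)\subseteq V_{i-1}\text{ for all } i=1,\dots,r\}$. *)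

(* Defs.v *)
From HB Require Import structures.
From mathcomp Require Import all_boot all_order all_algebra.
Set Implicit Arguments. Unset Strict Implicit. Unset Printing Implicit Defensive.
Import GRing.Theory.
Local Open Scope ring_scope.

(* Subspaces of F^n are represented (mxalgebra style) by the row space of a
   square matrix in 'M[F]_n; vectors of F^n are column vectors and a matrix
   a acts on F^n by v |-> a *m v.  The image a(V) of the subspace spanned by
   the rows of V (as column vectors) is then spanned by the rows of V *m a^T. *)

Definition is_flag (F : fieldType) (n r : nat) (V : nat -> 'M[F]_n) : Prop :=
  V 0%N = 0 /\ (V r == (1%:M : 'M[F]_n))%MS /\
  (forall i : nat, (1 <= i <= r)%N -> (V i.-1 < V i)%MS).

Definition flag_sig (F : fieldType) (n : nat) (V : nat -> 'M[F]_n) (i : nat)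
  : nat := (\rank (V i) - \rank (V i.-1))%N.

Definition phi_flag (F : fieldType) (n r : nat) (V : nat -> 'M[F]_n)
  : pred 'M[F]_n :=
  [pred a | [forall i : 'I_r, (V i.+1 *m a^T <= V i)%MS]].

Definition semigroup_iso (F : fieldType) (n : nat) (S T : pred 'M[F]_n)
  : Prop :=
  exists f : 'M[F]_n -> 'M[F]_n,
    [/\ {in S, forall a, f a \in T},
        {in S &, injective f},
        (forall b, b \in T -> exists2 a, a \in S & f a = b) &
        {in S &, forall a b, f (a *m b) = f a *m f b}].

(* Main.v *)
Require Import Defs.
From HB Require Import structures.
From mathcomp Require Import all_boot all_order all_algebra.
From mathcomp Require Import zify.

Set Implicit Arguments. Unset Strict Implicit. Unset Printing Implicit Defensive.
Import GRing.Theory.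
Local Open Scope ring_scope.

Lemma phiP (F : fieldType) n r (V : nat -> 'M[F]_n) a :
  reflect (forall i, (i < r)%N -> (V i.+1 *m a^T <= V i)%MS) (a \in phi_flag r V).
Proof.
rewrite inE; apply: (iffP forallP) => [H i ir | H i]; first exact: (H (Ordinal ir)).
exact: H.
Qed.

Lemma phiD (F : fieldType) n r (V : nat -> 'M[F]_n) a i :
  a \in phi_flag r V -> (i < r)%N -> (V i.+1 *m a^T <= V i)%MS.
Proof. by move/phiP; apply. Qed.

Lemma flag_mono (F : fieldType) n r (V : nat -> 'M[F]_n) i k :
  is_flag r V -> (i <= k)%N -> (k <= r)%N -> (V i <= V k)%MS.
Proof.
move=> [_ [_ Hs]]; elim: k => [|k IH] ik kr.
  by rewrite leqn0 in ik; move/eqP: ik => ->.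
rewrite leq_eqVlt in ik; case/orP: ik => [/eqP->//|ik].
apply: submx_trans (IH ik (ltnW kr)) _.
by apply: ltmxW; apply: (Hs k.+1); rewrite kr.
Qed.

Lemma phi0 (F : fieldType) n r (V : nat -> 'M[F]_n) : 0 \in phi_flag r V.
Proof. by apply/phiP => i _; rewrite trmx0 mulmx0 sub0mx. Qed.

Lemma phiM (F : fieldType) n r (V : nat -> 'M[F]_n) a b :
  is_flag r V -> a \in phi_flag r V -> b \in phi_flag r V -> a *m b \in phi_flag r V.
Proof.
move=> HV Ha Hb; apply/phiP => i ir; rewrite trmx_mul mulmxA.
apply: submx_trans (submxMr _ (phiD Hb ir)) _.
case: i ir => [|i] ir; first by rewrite HV.1 mul0mx sub0mx.
apply: submx_trans (phiD Ha (ltnW ir)) _.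
by apply: (flag_mono HV) => //; lia.
Qed.

Fixpoint Rset (F : fieldType) n r (V : nat -> 'M[F]_n) (t : nat) (y : 'M[F]_n) : Prop :=
  match t with
  | 0 => y = 0
  | t'.+1 => forall s, s \in phi_flag r V -> Rset r V t' (s *m y)
  end.

Lemma sep (F : fieldType) n m (U : 'M[F]_(m, n)) (v : 'rV[F]_n) :
  ~~ (v <= U)%MS -> exists lam : 'cV[F]_n, U *m lam = 0 /\ v *m lam != 0.
Proof.
rewrite submxE => Hv.
have [k Hk] : exists k, (v *m cokermx U) 0 k != 0.
  case: (pickP (fun k => (v *m cokermx U) 0 k != 0)) => [k Hk|H]; first by exists k.
  exfalso; move/negP: Hv; apply; apply/eqP/matrixP => i j.
  by rewrite (ord1 i); have := H j; rewrite /= => /negbFE/eqP ->; rewrite mxE.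
exists (cokermx U *m delta_mx k 0); split; first by rewrite mulmxA mulmx_coker mul0mx.
rewrite mulmxA -colE; apply/negP => /eqP/matrixP/(_ 0 0).
by rewrite [col _ _ _ _]mxE [RHS]mxE => h; rewrite h eqxx in Hk.
Qed.

Definition mk (F : fieldType) n (lam : 'cV[F]_n) (w : 'rV[F]_n) : 'M[F]_n := (lam *m w)^T.

Lemma mkP (F : fieldType) n r (V : nat -> 'M[F]_n) lam w :
  (forall i, (i < r)%N -> V i.+1 *m lam = 0 \/ (w <= V i)%MS) -> mk lam w \in phi_flag r V.
Proof.
move=> H; apply/phiP => i ir; rewrite /mk trmxK mulmxA.
case: (H i ir) => [->|Hw]; first by rewrite mul0mx sub0mx.
exact: submx_trans (submxMl _ _) Hw.
Qed.

Lemma sub_kill (F : fieldType) n m p q (A : 'M[F]_(m, n)) (U : 'M[F]_(p, n)) (lam : 'M[F]_(n, q)) :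
  (A <= U)%MS -> U *m lam = 0 -> A *m lam = 0.
Proof. by case/submxP => D -> h; rewrite -mulmxA h mulmx0. Qed.

Lemma scal11_nz (F : fieldType) (M : 'M[F]_1) : M != 0 -> M 0 0 != 0.
Proof.
apply: contra_neq => h; apply/matrixP => i j.
by rewrite (ord1 i) (ord1 j) h mxE.
Qed.

Lemma keyrow (F : fieldType) n r (V : nat -> 'M[F]_n) t (v : 'rV[F]_n) :
  is_flag r V -> (t.+1 <= r)%N -> ~~ (v <= V t.+1)%MS ->
  exists2 s, s \in phi_flag r V & ~~ (v *m s^T <= V t)%MS.
Proof.
move=> HV tr Hv.
have ex : exists j, (v <= V j)%MS.
  exists r; apply: submx_trans (submx1 v) _; by case/andP: HV.2.1.
case: (ex_minnP ex) => j Hj Hmin.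
have jr : (j <= r)%N by apply: Hmin; apply: submx_trans (submx1 v) _; case/andP: HV.2.1.
have tj : (t.+2 <= j)%N.
  rewrite ltnNge; apply/negP => jt; move/negP: Hv; apply.
  exact: submx_trans Hj (flag_mono HV jt tr).
case: j Hj Hmin jr tj => [//|j] Hj Hmin jr tj.
have vj : ~~ (v <= V j)%MS by apply/negP => H; have := Hmin j H; rewrite ltnn.
have [lam [Hl1 Hl2]] := sep vj.
have Hs : (V j.-1 < V j)%MS by apply: HV.2.2; lia.
have [k Hk] : exists k, ~~ (row k (V j) <= V j.-1)%MS.
  by apply/row_subPn; rewrite ltmxE in Hs; case/andP: Hs.
exists (mk lam (row k (V j))).
  apply: mkP => i ir; case: (leqP i.+1 j) => h.
    by left; exact: (sub_kill (flag_mono HV h (ltnW jr)) Hl1).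
  right; apply: submx_trans (row_sub _ _) _; apply: (flag_mono HV) => //; exact: ltnW.
rewrite /mk trmxK mulmxA (mx11_scalar (v *m lam)) mul_scalar_mx.
rewrite (eqmx_scale _ (scal11_nz Hl2)); apply/negP => H; move/negP: Hk; apply.
apply: submx_trans H _; apply: (flag_mono HV); lia.
Qed.

Lemma keymx (F : fieldType) n r (V : nat -> 'M[F]_n) t (A : 'M[F]_n) :
  is_flag r V -> (t.+1 <= r)%N -> ~~ (A <= V t.+1)%MS ->
  exists2 s, s \in phi_flag r V & ~~ (A *m s^T <= V t)%MS.
Proof.
move=> HV tr /row_subPn [i Hi].
have [s Hs Hns] := keyrow HV tr Hi.
exists s => //; apply/negP => H; move/negP: Hns; apply.
by rewrite -row_mul; apply: submx_trans (row_sub _ _) H.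
Qed.

Lemma Rchar (F : fieldType) n r (V : nat -> 'M[F]_n) t y :
  is_flag r V -> (t <= r)%N -> y \in phi_flag r V -> (Rset r V t y <-> (y^T <= V t)%MS).
Proof.
move=> HV; elim: t y => [|t IH] y tr Hy /=.
  rewrite HV.1 submx0; split => [->|/eqP h]; first by rewrite trmx0.
  by apply: trmx_inj; rewrite h trmx0.
split => [H | H s Hs].
  apply/negPn/negP => Hn; have [s Hs Hns] := keymx HV tr Hn.
  move/negP: Hns; apply.
  by have := H s Hs; rewrite (IH _ (ltnW tr) (phiM HV Hs Hy)) trmx_mul.
rewrite (IH _ (ltnW tr) (phiM HV Hs Hy)) trmx_mul.
apply: submx_trans (submxMr _ H) _; exact: phiD Hs tr.
Qed.

Definition indep (F : fieldType) n (S : pred 'M[F]_n) (P : 'M[F]_n -> Prop)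
  (ys : seq 'M[F]_n) : Prop :=
  forall i, (i < size ys)%N ->
   [/\ nth 0 ys i \in S, P (nth 0 ys i) &
       exists2 x, x \in S & (forall j, (j < i)%N -> x *m nth 0 ys j = 0) /\
                            x *m nth 0 ys i != 0].

Lemma upper (F : fieldType) n r (V : nat -> 'M[F]_n) t ys :
  is_flag r V -> (1 <= t)%N -> (t <= r)%N -> indep (phi_flag r V) (Rset r V t) ys ->
  (size ys <= \rank (V t) - \rank (V 1))%N.
Proof.
move=> HV t1 tr Hind.
have claim : forall m, (m <= size ys)%N -> exists U : 'M[F]_n,
   [/\ (V 1 <= U)%MS, (U <= V t)%MS, (\rank (V 1) + m <= \rank U)%N &
       forall K : 'M[F]_n, (V 1 <= K)%MS ->
         (forall j, (j < m)%N -> ((nth 0 ys j)^T <= K)%MS) -> (U <= K)%MS].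
  elim => [|m IH] ms.
    exists (V 1); split => //; first exact: (flag_mono HV).
    by rewrite addn0.
  have [U [U1 Ut Ur Umin]] := IH (ltnW ms).
  have [Hy HR [x Hx [Hk Hnz]]] := Hind m ms.
  have yt := (Rchar HV tr Hy).1 HR.
  have nyU : ~~ ((nth 0 ys m)^T <= U)%MS.
    apply/negP => H; move/negP: Hnz; apply.
    have: (U <= kermx x^T)%MS.
      apply: Umin.
        rewrite sub_kermx -submx0 -HV.1; apply: (phiD (i:=0) Hx).
        exact: leq_trans t1 tr.
      by move=> j jm; rewrite sub_kermx -trmx_mul Hk // trmx0.
    move/(submx_trans H); rewrite sub_kermx -trmx_mul trmx_eq0 => //.
  exists (U + (nth 0 ys m)^T)%MS; split.
  - exact: submx_trans U1 (addsmxSl _ _).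
  - by rewrite addsmx_sub Ut.
  - rewrite addnS; apply: leq_ltn_trans Ur _; apply: rank_ltmx.
    rewrite ltmxE addsmxSl /=; apply/negP; rewrite addsmx_sub => /andP [_ h].
    by move/negP: nyU.
  - move=> K K1 HK; rewrite addsmx_sub Umin //.
      by rewrite HK.
    by move=> j jm; apply: HK; apply: ltnW.
have [U [U1 Ut Ur _]] := claim _ (leqnn _).
have := leq_trans Ur (mxrankS Ut); lia.
Qed.

Lemma cw_nz (F : fieldType) n (c : 'cV[F]_n) (w : 'rV[F]_n) :
  c != 0 -> w != 0 -> c *m w != 0.
Proof.
move=> hc hw.
have [i Hi] : exists i, c i 0 != 0.
  case: (pickP (fun i => c i 0 != 0)) => [i Hi|H]; first by exists i.
  by move/negP: hc; case; apply/eqP/matrixP => i j; rewrite (ord1 j); have := H i; rewrite /= => /negbFE/eqP ->; rewrite mxE.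
have [k Hk] : exists k, w 0 k != 0.
  case: (pickP (fun k => w 0 k != 0)) => [k Hk|H]; first by exists k.
  by move/negP: hw; case; apply/eqP/matrixP => i0 j; rewrite (ord1 i0); have := H j; rewrite /= => /negbFE/eqP ->; rewrite mxE.
apply/negP => /eqP/matrixP/(_ i k); rewrite !mxE big_ord1 => /eqP.
by rewrite mulf_eq0 (negbTE Hi) (negbTE Hk).
Qed.

Lemma prod_mk (F : fieldType) n (lam c : 'cV[F]_n) (w u : 'rV[F]_n) :
  mk lam w *m mk c u = ((u *m lam) 0 0 *: (c *m w))^T.
Proof.
rewrite /mk -trmx_mul mulmxA -(mulmxA c) [u *m lam]mx11_scalar mul_mx_scalar.
by rewrite -scalemxAl [in RHS]mxE eqxx mulr1n.
Qed.

Lemma lower (F : fieldType) n r (V : nat -> 'M[F]_n) t :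
  is_flag r V -> (1 <= t)%N -> (t < r)%N ->
  exists ys, indep (phi_flag r V) (Rset r V t) ys /\ size ys = (\rank (V t) - \rank (V 1))%N.
Proof.
move=> HV t1 tr.
have [c [Hc cnz]] : exists c : 'cV[F]_n, V r.-1 *m c = 0 /\ c != 0.
  have Hs : (V r.-1 < V r)%MS by apply: HV.2.2; rewrite leqnn andbT; lia.
  have [k Hk] : exists k, ~~ (row k (V r) <= V r.-1)%MS.
    by apply/row_subPn; rewrite ltmxE in Hs; case/andP: Hs.
  have [lam [H1 H2]] := sep Hk.
  exists lam; split => //; apply: contraNneq H2 => ->; by rewrite mulmx0.
have [w [Hw wnz]] : exists w : 'rV[F]_n, (w <= V 1)%MS /\ w != 0.
  have Hs : (V 0 < V 1)%MS by apply: (HV.2.2 1); lia.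
  have [k Hk] : exists k, ~~ (row k (V 1) <= V 0)%MS.
    by apply/row_subPn; rewrite ltmxE in Hs; case/andP: Hs.
  by exists (row k (V 1)); rewrite row_sub -submx0 -HV.1.
have r1t : (\rank (V 1) <= \rank (V t))%N by apply: mxrankS; apply: (flag_mono HV) => //; lia.
set D := (\rank (V t) - \rank (V 1))%N.
have claim : forall m, (m <= D)%N -> exists us : seq 'rV[F]_n, exists U : 'M[F]_n,
   [/\ (V 1 <= U)%MS, (U <= V t)%MS, (\rank U <= \rank (V 1) + m)%N,
       (forall j, (j < m)%N -> (nth 0 us j <= U)%MS) &
       (forall i, (i < m)%N -> exists lam : 'cV[F]_n,
         [/\ V 1 *m lam = 0, (forall j, (j < i)%N -> nth 0 us j *m lam = 0) &
             nth 0 us i *m lam != 0])] /\ size us = m.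
  elim => [|m IH] mD.
    exists [::], (V 1); split => //; split => //; first by apply: (flag_mono HV) => //; lia.
    by rewrite addn0.
  have [us [U [[U1 Ut Ur Hus Hlam] Hsz]]] := IH (ltnW mD).
  have nVU : ~~ (V t <= U)%MS.
    apply/negP => /mxrankS h; move: mD; rewrite /D; lia.
  have [k Hk] := elimT row_subPn nVU.
  set u := row k (V t).
  have [lam [L1 L2]] := sep Hk.
  exists (rcons us u), (U + u)%MS; split; last by rewrite size_rcons Hsz.
  split.
  - exact: submx_trans U1 (addsmxSl _ _).
  - by rewrite addsmx_sub Ut row_sub.
  - apply: leq_trans (mxrank_adds_leqif U u).1 _.
    have := rank_leq_row u; lia.
  - move=> j jm; rewrite nth_rcons Hsz; case: ltnP => jm'.
      exact: submx_trans (Hus j jm') (addsmxSl _ _).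
    have -> : j = m by lia.
    by rewrite eqxx addsmxSr.
  - move=> i im; rewrite nth_rcons Hsz; case: ltnP => im'.
      have [l [l1 l2 l3]] := Hlam i im'; exists l; split => //.
      by move=> j ji; rewrite nth_rcons Hsz (leq_trans ji (ltnW im')); apply: l2.
    have -> : i = m by lia.
    rewrite eqxx; exists lam; split => //.
      exact: sub_kill U1 L1.
    by move=> j jm; rewrite nth_rcons Hsz jm; apply: sub_kill _ L1; apply: Hus.
have [us [U [[U1 Ut Ur Hus Hlam] Hsz]]] := claim D (leqnn _).
exists (map (mk c) us); split; last by rewrite size_map.
move=> i; rewrite size_map => iz.
rewrite (nth_map 0) //.
have ut : forall j, (j < D)%N -> (nth 0 us j <= V t)%MS.
  by move=> j jD; apply: submx_trans (Hus j jD) Ut.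
have HS : mk c (nth 0 us i) \in phi_flag r V.
  apply: mkP => i' i'r; case: (leqP i'.+1 r.-1) => h.
    by left; apply: sub_kill _ Hc; apply: (flag_mono HV) => //; lia.
  right; apply: submx_trans (ut i _) _; first by rewrite -Hsz.
  apply: (flag_mono HV) => //; lia.
split => //.
  apply/(Rchar HV (ltnW tr) HS); rewrite /mk trmxK; apply: submx_trans (submxMl _ _) (ut i _); by rewrite -Hsz.
have iD : (i < D)%N by rewrite -Hsz.
have [lam [l1 l2 l3]] := Hlam i iD.
exists (mk lam w).
  apply: mkP => i' i'r; case: i' i'r => [|i'] i'r; first by left.
  by right; apply: submx_trans Hw _; apply: (flag_mono HV) => //; lia.
split.
  move=> j ji; rewrite (nth_map 0); last by apply: ltn_trans iz.
  by rewrite prod_mk l2 // mxE scale0r trmx0.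
rewrite prod_mk trmx_eq0 scalemx_eq0 negb_or cw_nz // andbT.
exact: scal11_nz.
Qed.


Lemma transfer (F : fieldType) n r (V W : nat -> 'M[F]_n) (f : 'M[F]_n -> 'M[F]_n) :
  is_flag r V -> is_flag r W ->
  {in phi_flag r V, forall a, f a \in phi_flag r W} ->
  {in phi_flag r V &, injective f} ->
  (forall b, b \in phi_flag r W -> exists2 a, a \in phi_flag r V & f a = b) ->
  {in phi_flag r V &, forall a b, f (a *m b) = f a *m f b} ->
  forall t,
  (forall ys, indep (phi_flag r V) (Rset r V t) ys ->
     indep (phi_flag r W) (Rset r W t) (map f ys)) /\
  (forall zs, indep (phi_flag r W) (Rset r W t) zs ->
     exists ys, indep (phi_flag r V) (Rset r V t) ys /\ size ys = size zs).
Proof.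
move=> HV HW fS finj fsurj fmul t.
have f0 : f 0 = 0.
  have [a Ha fa] := fsurj 0 (phi0 _ _).
  have e : f 0 = f (0 *m a) by rewrite mul0mx.
  by rewrite e fmul ?phi0 // fa mulmx0.
have fz : forall y, y \in phi_flag r V -> (f y == 0) = (y == 0).
  move=> y Hy; apply/eqP/eqP => [h|->] //.
  by apply: finj => //; [exact: phi0 | rewrite h f0].
have Rt : forall t y, y \in phi_flag r V -> Rset r V t y <-> Rset r W t (f y).
  elim => [|u IH] y Hy /=.
    by split => [->//|/eqP h]; apply/eqP; rewrite -fz.
  split => H s Hs.
    have [a Ha <-] := fsurj s Hs.
    rewrite -fmul //; apply/(IH _ (phiM HV Ha Hy)); exact: H.
  apply/(IH _ (phiM HV Hs Hy)); rewrite fmul //; apply: H; exact: fS.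
have prodz : forall x y, x \in phi_flag r V -> y \in phi_flag r V ->
    (f x *m f y == 0) = (x *m y == 0).
  by move=> x y Hx Hy; rewrite -fmul // fz // phiM.
split.
  move=> ys Hind i; rewrite size_map => iz.
  have [Hy HR [x Hx [Hk Hnz]]] := Hind i iz.
  rewrite (nth_map 0) //; split; first exact: fS.
    by apply/Rt.
  exists (f x); first exact: fS.
  split.
    move=> j ji; have jz : (j < size ys)%N by apply: ltn_trans iz.
    rewrite (nth_map 0) //; apply/eqP; rewrite prodz //; last by case: (Hind j jz).
    by apply/eqP; apply: Hk.
  by rewrite prodz.
move=> zs Hind.
have [ys [Hys Hin]] : exists ys, map f ys = zs /\ forall y, y \in ys -> y \in phi_flag r V.
  have : forall z, z \in zs -> z \in phi_flag r W.
    move=> z /(nthP 0) [i iz <-]; by case: (Hind i iz).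
  elim: (zs) => [|z zs' IH] Hz; first by exists [::].
  have [a Ha fa] := fsurj z (Hz z (mem_head _ _)).
  have [ys' [e1 e2]] := IH (fun z' h => Hz z' (@mem_behead _ (z :: zs') _ h)).
  exists (a :: ys'); split; first by rewrite /= fa e1.
  by move=> y; rewrite inE => /orP [/eqP->//|]; apply: e2.
subst zs; exists ys; split; last by rewrite size_map.
move=> i iz; have iz' : (i < size (map f ys))%N by rewrite size_map.
have [Hy HR [x' Hx' [Hk Hnz]]] := Hind i iz'.
have yS : forall j, (j < size ys)%N -> nth 0 ys j \in phi_flag r V.
  by move=> j jz; apply: Hin; apply: mem_nth.
rewrite (nth_map 0) // in HR Hnz.
split; first exact: yS.
  by apply/(Rt _ _ (yS i iz)).
have [x Hx fx] := fsurj x' Hx'.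
exists x => //; split.
  move=> j ji; have jz : (j < size ys)%N by apply: ltn_trans iz.
  apply/eqP; rewrite -prodz ?yS // fx -(nth_map 0 0) //; apply/eqP; exact: Hk.
by rewrite -prodz ?yS // fx.
Qed.

Theorem proposition16 (F : fieldType) (n r : nat) (V W : nat -> 'M[F]_n) :
  (1 <= n)%N -> (3 <= r)%N ->
  is_flag r V -> is_flag r W ->
  semigroup_iso (phi_flag r V) (phi_flag r W) ->
  forall t : nat, (2 <= t <= r.-1)%N -> flag_sig V t = flag_sig W t.
Proof.
move=> _ r3 HV HW [f [fS finj fsurj fmul]] t /andP [t2 tr].
have key : forall u, (1 <= u)%N -> (u < r)%N ->
    (\rank (V u) - \rank (V 1))%N = (\rank (W u) - \rank (W 1))%N.
  move=> u u1 ur; have [T1 T2] := transfer HV HW fS finj fsurj fmul u.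
  apply/eqP; rewrite eqn_leq; apply/andP; split.
    have [ys [Hi Hs]] := lower HV u1 ur.
    rewrite -Hs -(size_map f); apply: (upper HW u1 (ltnW ur)); exact: T1.
  have [zs [Hi Hs]] := lower HW u1 ur.
  have [ys [Hy Hsz]] := T2 zs Hi.
  rewrite -Hs -Hsz; exact: (upper HV u1 (ltnW ur)).
have m1 : forall (X : nat -> 'M[F]_n) a b, is_flag r X -> (a <= b)%N -> (b <= r)%N ->
    (\rank (X a) <= \rank (X b))%N.
  by move=> X a b HX ab br; apply: mxrankS; apply: (flag_mono HX).
have k1 := key t ltac:(lia) ltac:(lia).
have k2 := key t.-1 ltac:(lia) ltac:(lia).
have a1 := m1 V 1 t.-1 HV ltac:(lia) ltac:(lia).
have a2 := m1 V t.-1 t HV ltac:(lia) ltac:(lia).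
have b1 := m1 W 1 t.-1 HW ltac:(lia) ltac:(lia).
have b2 := m1 W t.-1 t HW ltac:(lia) ltac:(lia).
rewrite /flag_sig; move: k1 k2 a1 a2 b1 b2; clear.
move: (\rank (V t)) (\rank (V t.-1)) (\rank (V 1)) (\rank (W t)) (\rank (W t.-1)) (\rank (W 1)) => *; lia.
Qed.
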